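(* Let $\pi,\tau\in\mathfrak{S}_m$. Then $\pi$ and $\tau$ are super-strongly c-Wilf equivalent if and only if $r^\pi_{n,S}=r^\tau_{n,S}$ for all $n$ and all sets $S$ of positive integers.
   Context: The standardization $\operatorname{st}(w)$ of a word of distinct integers replaces its smallest entry by 1, the next smallest by 2, etc. For $\pi\in\mathfrak{S}_m$ and $\sigma\in\mathfrak{S}_n$, $\operatorname{Em}(\pi,\sigma)=\{i\in[n-m+1]:\operatorname{st}(\sigma_i\cdots\sigma_{i+m-1})=\pi\}$. For a set $S$ of positive integers, $a^\pi_{n,S}$ is the number of $\sigma\in\mathfrak{S}_n$ with $\operatorname{Em}(\pi,\sigma)=S$; $\pi,\tau$ are super-strongly c-Wilf equivalent if $a^\pi_{n,S}=a^\tau_{n,S}$ for all $n,S$. The overlap set is $\mathcal{O}_\pi=\{i\in[m-1]:\operatorname{st}(\pi_{i+1}\cdots\pi_m)=\operatorname{st}(\pi_1\cdots\pi_{m-i})\}$. The refined cluster number $r^\pi_{n,S}$ is defined as follows: if $S=\{i_1<\dots<i_k\}\subseteq[n-m+1]$ satisfies $i_1=1$, $i_k=n-m+1$ and $i_{j+1}-i_j\in\mathcal{O}_\pi$ for all $j\in[k-1]$, then $r^\pi_{n,S}$ is the number of $\sigma\in\mathfrak{S}_n$ with $S\subseteq\operatorname{Em}(\pi,\sigma)$; otherwise $r^\pi_{n,S}=0$. *)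

(* Defs.v *)
From mathcomp Require Import all_boot all_order all_fingroup.
From mathcomp Require Import finmap.
Set Implicit Arguments. Unset Strict Implicit. Unset Printing Implicit Defensive.
Local Open Scope fset_scope.

(* A permutation sigma in S_n (perm of 'I_n) is viewed as the word
   sigma_1 ... sigma_n with sigma_k = (sigma (k-1)).+1  (values in 1..n). *)
Definition word (n : nat) (s : 'S_n) : seq nat :=
  [seq (s i).+1 | i <- enum 'I_n].

Definition st (w : seq nat) : seq nat :=
  [seq (count (fun y => y < x) w).+1 | x <- w].

Definition factor (w : seq nat) (i m : nat) : seq nat := take m (drop i.-1 w).

Definition Em (m n : nat) (p : 'S_m) (s : 'S_n) : {fset nat} :=
  [fset i | i in iota 1 (n - m + 1)%N & st (factor (word s) i m) == word p].

Definition a_num (m : nat) (p : 'S_m) (n : nat) (S : {fset nat}) : nat :=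
  #|[set s : 'S_n | Em p s == S]|.

Definition overlap (m : nat) (p : 'S_m) : pred nat :=
  fun i => [&& 1 <= i, i <= (m - 1)%N &
     st (drop i (word p)) == st (take (m - i)%N (word p))].

Definition cluster_set (m : nat) (p : 'S_m) (n : nat) (S : {fset nat}) : bool :=
  let l := sort leq S in
  [&& S `<=` [fset i | i in iota 1 (n - m + 1)%N],
      head 0 l == 1, last 0 l == (n - m + 1)%N &
      all (fun j => overlap p (nth 0 l j.+1 - nth 0 l j)%N) (iota 0 (size l).-1)].

Definition r_num (m : nat) (p : 'S_m) (n : nat) (S : {fset nat}) : nat :=
  if cluster_set p n S then #|[set s : 'S_n | S `<=` Em p s]| else 0.

Definition super_strongly_cwilf (m : nat) (p t : 'S_m) : Prop :=
  forall (n : nat) (S : {fset nat}), a_num p n S = a_num t n S.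

(* Main.v *)
Require Import Defs.
From mathcomp Require Import all_boot all_order all_fingroup.
From mathcomp Require Import finmap zify.
Set Implicit Arguments. Unset Strict Implicit. Unset Printing Implicit Defensive.

Lemma st_mono (g : nat -> nat) (X : seq nat) :
  {in X &, forall x y, (g x < g y) = (x < y)} -> st (map g X) = st X.
Proof.
move=> hg; rewrite /st -map_comp; apply/eq_in_map => x xX /=.
rewrite count_map; congr S; apply: eq_in_count => y yX /=; exact: hg.
Qed.

Lemma size_st w : size (st w) = size w.
Proof. by rewrite size_map. Qed.

Definition rk (F : seq nat) (x : nat) := (count (fun y => y < x) F).+1.

Lemma stE F : st F = map (rk F) F.
Proof. by []. Qed.

Lemma count_lt_strict (F : seq nat) x y : x \in F -> x < y ->
  count (fun z => z < x) F < count (fun z => z < y) F.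
Proof.
move=> xF xy.
have h1 : count (fun z => z < x) F + count (pred1 x) F <= count (fun z => z < y) F.
  rewrite -count_predUI.
  have -> : count (predI (fun z => z < x) (pred1 x)) F = 0.
    by rewrite (eq_count (a2 := pred0)) ?count_pred0 // => z /=; apply/negbTE; apply/andP => -[zx /eqP ezx]; move: zx; rewrite ezx ltnn.
  rewrite addn0; apply: sub_count => z /=; case/orP => [zx|/eqP -> //].
  exact: ltn_trans zx xy.
have h : 0 < count (pred1 x) F.
  rewrite -has_count; apply/hasP; exists x => //=.
apply: leq_trans h1; rewrite -addn1 leq_add2l //.
Qed.

Lemma rk_mono (F : seq nat) : {in F &, forall x y, (rk F x < rk F y) = (x < y)}.
Proof.
move=> x y xF yF; rewrite /rk ltnS; case: (ltnP x y) => xy.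
  exact: count_lt_strict.
apply/negbTE; rewrite -leqNgt; apply: sub_count => z /= zy; exact: leq_trans zy xy.
Qed.

Lemma st_sub (F X : seq nat) : {subset X <= F} -> st (map (rk F) X) = st X.
Proof. move=> sXF; apply: st_mono => x y /sXF xF /sXF yF; exact: rk_mono. Qed.

Lemma st_drop d F : st (drop d (st F)) = st (drop d F).
Proof. by rewrite [st F]stE -map_drop st_sub // => x; apply: mem_drop. Qed.

Lemma st_take d F : st (take d (st F)) = st (take d F).
Proof. by rewrite [st F]stE -map_take st_sub // => x; apply: mem_take. Qed.


Lemma inEm m n (p : 'S_m) (s : 'S_n) i :
  (i \in Em p s) = (0 < i <= n - m + 1) && (st (factor (word s) i m) == word p).
Proof.
have -> : (i \in Em p s) = (i \in iota 1 (n - m + 1)) && (st (factor (word s) i m) == word p).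
  by rewrite /Em inE.
by rewrite mem_iota; case: i => //= i; rewrite add1n ltnS.

Qed.

Lemma size_word n (s : 'S_n) : size (word s) = n.
Proof. by rewrite size_map size_enum_ord. Qed.

Lemma two_occ m n (p : 'S_m) (s : 'S_n) i j :
  i \in Em p s -> j \in Em p s -> i < j -> j - i < m -> overlap p (j - i).
Proof.
rewrite !inEm => /andP[/andP[i0 _] /eqP E1] /andP[_ /eqP E2] ij jim.
rewrite /overlap subn_gt0 ij /=.
have dm : j - i <= m - 1 by rewrite leq_subRL ?addn1 // (leq_trans _ jim).
rewrite dm /=.
rewrite -{1}E1 -E2 st_drop st_take /factor.
rewrite take_takel ?leq_subr //.
have -> : drop (j - i) (take m (drop i.-1 (word s))) = take (m - (j - i)) (drop (j - i + i.-1) (word s)).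
  by rewrite -drop_drop [RHS]take_drop subnK // ltnW.
suff -> : j - i + i.-1 = j.-1 by [].
case: i i0 ij {E1 jim dm} => // i _ ij /=.
case: j ij {E2} => // j ij /=; rewrite subSS; lia.
Qed.

Lemma inEm0 m n (p : 'S_m) (s : 'S_n) i : (i \in Em p s) = (i \in iota 1 (n - m + 1)) && (st (factor (word s) i m) == word p).
Proof. by rewrite /Em inE. Qed.

Lemma nth_word n (s : 'S_n) j (hj : j < n) : nth 0 (word s) j = (s (Ordinal hj)).+1.
Proof.
rewrite /word (nth_map (Ordinal hj)) ?size_enum_ord //.
by rewrite -[X in nth _ _ X]/(nat_of_ord (Ordinal hj)) nth_ord_enum.
Qed.

Lemma uniq_word n (s : 'S_n) : uniq (word s).
Proof.
rewrite /word map_inj_uniq ?enum_uniq // => i j /succn_inj /val_inj; exact: perm_inj.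
Qed.

Definition bl n a l (s : 'S_n) := take l (drop a (word s)).

Lemma size_bl n a l (s : 'S_n) : a + l <= n -> size (bl a l s) = l.
Proof. by move=> h; rewrite /bl size_take size_drop size_word; case: (ltnP l (n - a)); lia. Qed.

Lemma uniq_bl n a l (s : 'S_n) : uniq (bl a l s).
Proof. by rewrite /bl take_uniq ?drop_uniq ?uniq_word. Qed.

Lemma nth_bl n a l (s : 'S_n) k (hk : k < l) (h : a + k < n) :
  nth 0 (bl a l s) k = (s (Ordinal h)).+1.
Proof. by rewrite /bl nth_take // nth_drop nth_word. Qed.

Lemma bl_eq n a l (s1 s2 : 'S_n) :
  (forall i : 'I_n, a <= i < a + l -> s1 i = s2 i) -> bl a l s1 = bl a l s2.
Proof.
move=> h; apply: (@eq_from_nth _ 0).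
  by rewrite /bl !size_take !size_drop !size_word.
move=> k; rewrite /bl size_take size_drop size_word => hk.
have kl : k < l by move: hk; case: (ltnP l (n - a)) => //; lia.
have akn : a + k < n by move: hk; case: (ltnP l (n - a)) => //; lia.
by rewrite !nth_take // !nth_drop !(nth_word _ akn) h //= leq_addr ltn_add2l kl.
Qed.

Definition pbf n a l (s : 'S_n) (k : 'I_l) : 'I_l :=
  if a + l <= n then insubd k (count (fun y => y < nth 0 (bl a l s) k) (bl a l s)) else k.

Lemma count_lt_size (F : seq nat) x : x \in F -> count (fun y => y < x) F < size F.
Proof.
move=> xF; rewrite -(count_predC (fun y => y < x) F) -{1}[count _ F]addn0 ltn_add2l.
by rewrite -has_count; apply/hasP; exists x => //=; rewrite ltnn.
Qed.

Lemma val_pbf n a l (s : 'S_n) (k : 'I_l) : a + l <= n ->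
  val (pbf a s k) = count (fun y => y < nth 0 (bl a l s) k) (bl a l s).
Proof.
move=> h; rewrite /pbf h val_insubd.
have -> : count (fun y => y < nth 0 (bl a l s) k) (bl a l s) < l.
  by rewrite -[X in _ < X](size_bl s h) count_lt_size // mem_nth // size_bl.
by [].
Qed.

Lemma pbf_inj n a l (s : 'S_n) : injective (@pbf n a l s).
Proof.
move=> k1 k2; case: (leqP (a + l) n) => h; last by rewrite /pbf leqNgt h.
move/(congr1 val); rewrite !val_pbf // => e.
have hk : forall k : 'I_l, nth 0 (bl a l s) k \in bl a l s.
  by move=> k; apply: mem_nth; rewrite size_bl.
have e' : rk (bl a l s) (nth 0 (bl a l s) k1) = rk (bl a l s) (nth 0 (bl a l s) k2).
  by rewrite /rk e.
have : nth 0 (bl a l s) k1 = nth 0 (bl a l s) k2.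
  case: (ltngtP (nth 0 (bl a l s) k1) (nth 0 (bl a l s) k2)) => // hxy.
    by move: hxy; rewrite -(rk_mono (hk k1) (hk k2)) e' ltnn.
  by move: hxy; rewrite -(rk_mono (hk k2) (hk k1)) e' ltnn.
move/eqP; rewrite nth_uniq ?size_bl ?uniq_bl // => /eqP; exact: val_inj.
Qed.

Definition pb n a l (s : 'S_n) : 'S_l := perm (@pbf_inj n a l s).

Lemma pbE n a l (s : 'S_n) (k : 'I_l) : a + l <= n ->
  val (pb a l s k) = count (fun y => y < nth 0 (bl a l s) k) (bl a l s).
Proof. by move=> h; rewrite permE val_pbf. Qed.

Lemma seq_enum_ord (F : seq nat) l : size F = l -> F = [seq nth 0 F (val i) | i <- enum 'I_l].
Proof.
move=> hs; rewrite (map_comp (nth 0 F) val) val_enum_ord -hs.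
by rewrite -{1}(mkseq_nth 0 F).
Qed.

Lemma word_pb n a l (s : 'S_n) : a + l <= n -> word (pb a l s) = st (bl a l s).
Proof.
move=> h; rewrite /st {2}(seq_enum_ord (size_bl s h)) -map_comp /word.
apply/eq_in_map => k _ /=; rewrite pbE //.
Qed.

Definition extf n a l (t : 'S_l) (i : 'I_n) : 'I_n :=
  if (a <= i) && (a + l <= n) then
    (if insub (i - a) is Some j then insubd i (a + t j) else i)
  else i.

Lemma extf_out n a l (t : 'S_l) (i : 'I_n) : ~~ (a <= i < a + l) -> extf a t i = i.
Proof.
rewrite /extf negb_and -leqNgt -ltnNge; case/orP => h.
  by rewrite leqNgt h.
case: ifP => // /andP[ai _]; rewrite insubN //; lia.
Qed.

Lemma extf_in n a l (t : 'S_l) (i : 'I_n) (k : 'I_l) : a + l <= n -> val i = a + k ->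
  val (extf a t i) = a + t k.
Proof.
move=> h ei; rewrite /extf ei leq_addr h /= addKn insubT /= => [|kl].
  exact: ltn_ord.
have -> : Sub (nat_of_ord k) kl = k by apply: val_inj.
by rewrite val_insubd; have := ltn_ord (t k); case: ifP => //; lia.
Qed.

Lemma blockP a l (i : nat) : a <= i < a + l -> {k : 'I_l | i = a + k}.
Proof.
move=> /andP[h1 h2]; have hk : i - a < l by lia.
by exists (Ordinal hk) => /=; lia.
Qed.

Lemma extf_inj n a l (t : 'S_l) : injective (@extf n a l t).
Proof.
move=> i1 i2.
case: (leqP (a + l) n) => h; last by rewrite /extf (leqNgt (a + l)) h !andbF.
case: (boolP (a <= i1 < a + l)) => b1; case: (boolP (a <= i2 < a + l)) => b2.
- case: (blockP b1) => k1 e1; case: (blockP b2) => k2 e2.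
  move/(congr1 val); rewrite (extf_in t h e1) (extf_in t h e2) => /addnI /val_inj /perm_inj ek.
  by apply: ord_inj; rewrite e1 e2 ek.
- case: (blockP b1) => k1 e1; rewrite (extf_out t b2) => e.
  have := extf_in t h e1; rewrite e => e'; move: b2; rewrite e'.
  by have := ltn_ord (t k1); rewrite leq_addr /= ltn_add2l => ->.
- case: (blockP b2) => k2 e2; rewrite (extf_out t b1) => e.
  have := extf_in t h e2; rewrite -e => e'; move: b1; rewrite e'.
  by have := ltn_ord (t k2); rewrite leq_addr /= ltn_add2l => ->.
- by rewrite (extf_out t b1) (extf_out t b2).
Qed.

Definition ext n a l (t : 'S_l) : 'S_n := perm (@extf_inj n a l t).
Arguments ext {n} a {l} t.

Lemma ext_out n a l (t : 'S_l) (i : 'I_n) : ~~ (a <= i < a + l) -> ext a t i = i.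
Proof. by rewrite permE; apply: extf_out. Qed.

Lemma ext_in n a l (t : 'S_l) (i : 'I_n) (k : 'I_l) : a + l <= n -> val i = a + k ->
  val (ext a t i) = a + t k.
Proof. by rewrite permE; apply: extf_in. Qed.

Lemma bl_ext_disj n a l a' l' (t : 'S_l) (s : 'S_n) :
  (a' + l' <= a) || (a + l <= a') -> bl a' l' (ext a t * s) = bl a' l' s.
Proof.
move=> hd; apply: bl_eq => i hi; rewrite permM ext_out //.
apply/negP => /andP[]; move: hi hd => /andP[]; lia.
Qed.

Lemma perm_map_enum l (t : 'S_l) : perm_eq [seq t i | i <- enum 'I_l] (enum 'I_l).
Proof.
apply: uniq_perm; first by rewrite map_inj_uniq ?enum_uniq //; apply: perm_inj.
  exact: enum_uniq.
move=> i; rewrite mem_enum inE; apply/mapP; exists (t^-1 i)%g; rewrite ?mem_enum //.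
by rewrite permKV.
Qed.

Lemma bl_ext n a l (t : 'S_l) (s : 'S_n) : a + l <= n ->
  bl a l (ext a t * s) = [seq nth 0 (bl a l s) (t i) | i <- enum 'I_l].
Proof.
move=> h; apply: (@eq_from_nth _ 0); first by rewrite size_bl // size_map size_enum_ord.
move=> k; rewrite size_bl // => kl.
have akn : a + k < n by lia.
rewrite nth_bl // (nth_map (Ordinal kl)) ?size_enum_ord //.
rewrite -[X in nth _ (enum _) X]/(nat_of_ord (Ordinal kl)) nth_ord_enum.
have akn' : a + t (Ordinal kl) < n by have := ltn_ord (t (Ordinal kl)); lia.
rewrite (nth_bl _ _ akn') // permM; congr S; congr (s _); apply: val_inj => /=.
by rewrite (ext_in t h (k := Ordinal kl)).
Qed.

Lemma count_bl_ext n a l (t : 'S_l) (s : 'S_n) (P : pred nat) : a + l <= n ->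
  count P (bl a l (ext a t * s)) = count P (bl a l s).
Proof.
move=> h; rewrite bl_ext // (map_comp (nth 0 (bl a l s)) (fun i => val (t i))).
rewrite (map_comp val t) count_map.
rewrite (seq.permP (perm_map val (perm_map_enum t))) val_enum_ord -count_map.
by rewrite -[in iota 0 l](size_bl s h) -/(mkseq _ _) mkseq_nth.
Qed.

Lemma pb_ext n a l (t : 'S_l) (s : 'S_n) : a + l <= n ->
  pb a l (ext a t * s) = (t * pb a l s)%g.
Proof.
move=> h; apply/permP => k; rewrite permM; apply: val_inj.
rewrite !pbE // count_bl_ext // bl_ext // (nth_map k) ?size_enum_ord //.
by rewrite nth_ord_enum.
Qed.

Section Swap.
Variables (n a l : nat) (h : a + l <= n) (R : pred 'S_n).
Hypothesis HR : forall (t : 'S_l) (s : 'S_n), R (ext a t * s)%g = R s.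

Definition fib (q : 'S_l) := [set s : 'S_n | (pb a l s == q) && R s].

Lemma fib_le q q' : #|fib q| <= #|fib q'|.
Proof.
pose tau := (q' * q^-1)%g.
rewrite -(card_imset (fib q) (mulgI (ext a tau))).
apply: subset_leq_card; apply/subsetP => x /imsetP[s]; rewrite !inE => /andP[/eqP pq Rs] ->.
by rewrite pb_ext // pq HR Rs /tau -mulgA mulVg mulg1 eqxx.
Qed.

Lemma fib_eq q q' : #|fib q| = #|fib q'|.
Proof. by apply/eqP; rewrite eqn_leq !fib_le. Qed.

Lemma card_cond (A : pred 'S_l) :
  #|[set s : 'S_n | A (pb a l s) && R s]| = #|A| * #|fib 1%g|.
Proof.
rewrite -sum1dep_card (partition_big (pb a l) A); last by move=> s /andP[].
rewrite -sum_nat_const; apply: eq_bigr => q Aq.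
rewrite sum1dep_card (fib_eq _ q); apply: eq_card => s; rewrite !inE.
by case: (pb a l s =P q) => [->|]; rewrite ?Aq ?andbF ?andbT //= eqxx.
Qed.
End Swap.

Lemma block_swap n a l (h : a + l <= n) (A B : pred 'S_l) (R : pred 'S_n) :
  #|A| = #|B| -> (forall (t : 'S_l) s, R (ext a t * s)%g = R s) ->
  #|[set s : 'S_n | A (pb a l s) && R s]| = #|[set s : 'S_n | B (pb a l s) && R s]|.
Proof. by move=> hAB HR; rewrite !(card_cond h HR) hAB. Qed.

Definition Ep m (p : 'S_m) n (s : 'S_n) i := st (factor (word s) i m) == word p.

Lemma Ep_block m (p : 'S_m) n (s : 'S_n) a l i :
  a + l <= n -> a < i -> i.-1 + m <= a + l ->
  Ep p s i = Ep p (pb a l s) (i - a).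
Proof.
move=> h ai im; rewrite /Ep word_pb // /factor [st (bl a l s)]stE -map_drop -map_take st_sub; last first.
  by move=> x /mem_take /mem_drop.
congr (st _ == _); rewrite /bl.
have k_def : (i - a).-1 + a = i.-1 by lia.
rewrite -(subnK (_ : (i - a).-1 <= l)); last by lia.
rewrite -take_drop take_takel; last by lia.
by rewrite drop_drop k_def.
Qed.

Lemma Ep_ext m (p : 'S_m) n (s : 'S_n) a l (t : 'S_l) i :
  (i.-1 + m <= a) || (a + l <= i.-1) -> Ep p (ext a t * s)%g i = Ep p s i.
Proof.
move=> hd; rewrite /Ep /factor.
have := @bl_ext_disj n a l i.-1 m t s hd; rewrite /bl => ->; by [].
Qed.

Section Multi.
Variables (m n : nat) (p t : 'S_m).

Definition blk := (nat * nat * seq nat)%type.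

Definition valid (b : blk) :=
  (b.1.1 + b.1.2 <= n) && all (fun i => (b.1.1 < i) && (i.-1 + m <= b.1.1 + b.1.2)) b.2.

Definition locA (p : 'S_m) (b : blk) : pred 'S_(b.1.2) :=
  fun q => all (fun i => Ep p q (i - b.1.1)) b.2.
Arguments locA : clear implicits.

Definition before (b b' : blk) := b.1.1 + b.1.2 <= b'.1.1.

Lemma condS_block (pp : 'S_m) (b : blk) (s : 'S_n) : valid b ->
  all (Ep pp s) b.2 = locA pp b (pb b.1.1 b.1.2 s).
Proof.
case/andP=> h /allP hv; apply: eq_in_all => i /hv /andP[ai im].
exact: Ep_block.
Qed.

Lemma condS_inv_after (pp : 'S_m) (b b' : blk) (tau : 'S_(b.1.2)) (s : 'S_n) :
  before b b' -> valid b' ->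
  all (Ep pp (ext b.1.1 tau * s)%g) b'.2 = all (Ep pp s) b'.2.
Proof.
rewrite /before => hb /andP[_ /allP hv]; apply: eq_in_all => i /hv /andP[ai im].
apply: Ep_ext; apply/orP; right; lia.
Qed.

Lemma condS_inv_before (pp : 'S_m) (b b' : blk) (tau : 'S_(b'.1.2)) (s : 'S_n) :
  before b b' -> valid b ->
  all (Ep pp (ext b'.1.1 tau * s)%g) b.2 = all (Ep pp s) b.2.
Proof.
rewrite /before => hb /andP[_ /allP hv]; apply: eq_in_all => i /hv /andP[ai im].
apply: Ep_ext; apply/orP; left; lia.
Qed.

Lemma multi (L : seq blk) :
  pairwise before L -> all valid L ->
  (forall b, b \in L -> #|locA p b| = #|locA t b|) ->
  forall R : pred 'S_n,
  (forall b, b \in L -> forall (tau : 'S_(b.1.2)) s, R (ext b.1.1 tau * s)%g = R s) ->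
  #|[set s : 'S_n | all (fun b => all (Ep p s) b.2) L && R s]| =
  #|[set s : 'S_n | all (fun b => all (Ep t s) b.2) L && R s]|.
Proof.
elim: L => [|b L IH] //= /andP[hbL pL] /andP[vb vL] hloc R hR.
have e1 : forall pp : 'S_m, 
  [set s : 'S_n | (all (Ep pp s) b.2 && all (fun b => all (Ep p s) b.2) L) && R s] =
  [set s : 'S_n | locA pp b (pb b.1.1 b.1.2 s) && (all (fun b => all (Ep p s) b.2) L && R s)].
  by move=> pp; apply/setP => s; rewrite !inE condS_block // andbA.
rewrite e1 (@block_swap n b.1.1 b.1.2 _ (locA p b) (locA t b)); first last.
- move=> tau s; rewrite hR ?mem_head //; congr andb.
  apply: eq_in_all => b' b'L; apply: condS_inv_after => //.
    by move/allP: hbL; apply.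
  by move/allP: vL; apply.
- by apply: hloc; rewrite mem_head.
- by case/andP: vb.
have e2 : forall pp : 'S_m,
  [set s : 'S_n | locA t b (pb b.1.1 b.1.2 s) && (all (fun b => all (Ep pp s) b.2) L && R s)] =
  [set s : 'S_n | all (fun b => all (Ep pp s) b.2) L && (all (Ep t s) b.2 && R s)].
  by move=> pp; apply/setP => s; rewrite !inE -condS_block // andbCA.
rewrite e2 IH //; last first.
- move=> b' b'L tau s; rewrite hR ?inE ?b'L ?orbT //; congr andb.
  apply: condS_inv_before => //; by move/allP: hbL; apply.
- by move=> b' b'L; apply: hloc; rewrite inE b'L orbT.
by apply: eq_card => s; rewrite !inE andbCA andbA.
Qed.
End Multi.

Lemma sorted_bounds (y : nat) c1 : sorted ltn (y :: c1) ->
  forall i, i \in y :: c1 -> y <= i <= last y c1.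
Proof.
elim: c1 y => [|z c2 IH] y /=; first by move=> _ i; rewrite inE => /eqP ->; rewrite leqnn.
case/andP => yz sz i; rewrite inE => /orP[/eqP ->|iz].
  by rewrite leqnn /=; have := IH z sz z (mem_head _ _); case/andP => _; apply: leq_trans; apply: ltnW.
by have := IH z sz i iz; case/andP => zi ->; rewrite andbT (leq_trans (ltnW yz) zi).
Qed.

Section Clusters.
Variable m : nat.

Fixpoint clusters (s : seq nat) : seq (seq nat) :=
  if s is x :: s' then
    match clusters s' with
    | c :: cs => if head 0 c < x + m then (x :: c) :: cs else [:: x] :: c :: cs
    | [::] => [:: [:: x]]
    end
  else [::].

Lemma flatten_clusters s : flatten (clusters s) = s.
Proof.
elim: s => [|x s IH] //=; move: IH; case: (clusters s) => [|c cs] /=; first by move <-.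
by case: ifP => _ /= <-.
Qed.

Definition crel := fun x y => (x < y) && (y < x + m).

Lemma clusters_prop s : sorted ltn s ->
  [/\ forall c, c \in clusters s -> (c != [::]) && sorted crel c,
      pairwise (fun c c' => last 0 c + m <= head 0 c') (clusters s) &
      forall c, c \in clusters s -> {subset c <= s}].
Proof.
elim: s => [|x s IH] //= hs.
have ss : sorted ltn s by move: hs; case: s {IH} => //= y s /andP[].
have xs : forall y, y \in s -> x < y.
  by move=> y ys; move: hs; rewrite (path_sortedE ltn_trans) => /andP[/allP H _]; exact: H.
case: (IH ss) => h1 h2 h3; move: h1 h2 h3 (flatten_clusters s).
case: (clusters s) => [|c cs] /= h1 h2 h3 hf.
  split => //; first by move=> c; rewrite inE => /eqP ->.
  by move=> c; rewrite inE => /eqP -> y; rewrite inE => /eqP ->; rewrite mem_head.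
have [cne csort] : (c != [::]) /\ sorted crel c by move/andP: (h1 c (mem_head _ _)).
have csl : sorted ltn c by apply: sub_sorted csort => u v /andP[].
have hl : forall c0, c0 \in c :: cs -> c0 != [::] -> head 0 c0 <= last 0 c0.
  move=> c0 /h1 /andP[_ s0]; case: c0 s0 => // y c1 s0 _ /=.
  have : sorted ltn (y :: c1) by apply: sub_sorted s0 => u v /andP[].
  by move/sorted_bounds => /(_ y (mem_head _ _)) /andP[].
have hcs : forall c0, c0 \in c :: cs -> {subset c0 <= s}.
  have hf' : flatten (c :: cs) = s := hf.
  by move=> c0 hc0 y hy; rewrite -hf'; apply/flattenP; exists c0.
case: ifP => hx.
- split.
  + move=> c0; rewrite inE => /orP[/eqP ->|hc0]; last by apply: h1; rewrite inE hc0 orbT.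
    rewrite /=; case: c cne csort hx hcs {csl hl h1 h2 h3 hf} => // y c1 _ sc hx hcs' /=.
    rewrite /= in sc; rewrite sc andbT /crel hx andbT; apply: xs.
    by apply: (hcs' _ (mem_head _ _)); exact: mem_head.
  + rewrite pairwise_cons; move: h2 => /andP[h2a ->]; rewrite andbT.
    by case: c cne h2a {csort csl hx hl hcs h1 h3 hf} => // y c1 _.
  + move=> c0; rewrite inE => /orP[/eqP ->|hc0].
      by move=> y; rewrite inE => /orP[/eqP ->|/(hcs c (mem_head _ _)) ys]; rewrite inE ?eqxx ?ys ?orbT.
    by move=> y /(hcs c0); rewrite inE hc0 orbT => /(_ isT) ys; rewrite inE ys orbT.
- split.
  + move=> c0; rewrite inE => /orP[/eqP -> //|]; exact: h1.
  + rewrite pairwise_cons (pairwise_cons _ c) h2 andbT; apply/allP => c0 hc0 /=.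
    rewrite inE in hc0; case/orP: hc0 => [/eqP ->|hc0]; first by rewrite leqNgt hx.
    move: h2 => /andP[/allP /(_ c0 hc0) h _].
    have := hl c (mem_head _ _) cne; lia.
  + move=> c0; rewrite inE => /orP[/eqP ->|hc0].
      by move=> y; rewrite inE => /eqP ->; rewrite mem_head.
    by move=> y /(hcs c0 hc0) ys; rewrite inE ys orbT.
Qed.
End Clusters.

Definition bn m (p : 'S_m) n (S : {fset nat}) := #|[set s : 'S_n | (S `<=` Em p s)%fset]|.

Lemma sortS_sorted (S : {fset nat}) : sorted ltn (sort leq S).
Proof.
by rewrite ltn_sorted_uniq_leq sort_uniq fset_uniq /=; apply: sort_sorted; exact: leq_total.
Qed.

Lemma G m (pp : 'S_m) n (S : {fset nat}) j :
  j < (size (sort leq S)).-1 ->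
  nth 0 (sort leq S) j.+1 - nth 0 (sort leq S) j < m ->
  ~~ overlap pp (nth 0 (sort leq S) j.+1 - nth 0 (sort leq S) j) -> bn pp n S = 0.
Proof.
move=> hj hm hov; apply/eqP; rewrite cards_eq0; apply/eqP/setP => s; rewrite !inE.
apply/negbTE/negP => /fsubsetP sub.
have hj1 : j.+1 < size (sort leq S) by lia.
have hj0 : j < size (sort leq S) by lia.
have mem1 : nth 0 (sort leq S) j \in Em pp s.
  by apply: sub; rewrite -(mem_sort leq) mem_nth.
have mem2 : nth 0 (sort leq S) j.+1 \in Em pp s.
  by apply: sub; rewrite -(mem_sort leq) mem_nth.
have lt : nth 0 (sort leq S) j < nth 0 (sort leq S) j.+1.
  by apply: (sorted_ltn_nth ltn_trans) => //; apply: sortS_sorted.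
by move/negP: hov; apply; apply: two_occ mem1 mem2 lt hm.
Qed.

Lemma key_r m (pp : 'S_m) l (S : {fset nat}) :
  [&& (S `<=` [fset i | i in iota 1 (l - m + 1)])%fset,
      head 0 (sort leq S) == 1 & last 0 (sort leq S) == (l - m + 1)%N] ->
  (forall j, j < (size (sort leq S)).-1 ->
     nth 0 (sort leq S) j.+1 - nth 0 (sort leq S) j < m) ->
  bn pp l S = r_num pp l S.
Proof.
move=> h3 hg; rewrite /r_num /cluster_set.
case: ifP => // /negbT.
move: h3 => /and3P[-> -> ->] /=; case/allPn => j; rewrite mem_iota add0n => /andP[_ hj] hov.
exact: G hj (hg _ hj) hov.
Qed.

Lemma Z m (p t : 'S_m) n (S : {fset nat}) :
  cluster_set p n S -> ~~ cluster_set t n S -> bn t n S = 0.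
Proof.
rewrite /cluster_set => /and4P[h1 h2 h3 /allP h4]; rewrite h1 h2 h3 /=.
case/allPn => j hjm hov; move: (h4 j hjm); rewrite /overlap => /and3P[_ hd _].
move: hjm; rewrite mem_iota add0n => /andP[_ hj].
apply: (@G m t n S j hj _ hov).
have : 1 <= nth 0 (sort leq S) j.+1 - nth 0 (sort leq S) j.
  by move: (h4 j); rewrite mem_iota add0n hj /= => /(_ isT) /and3P[].
lia.
Qed.

Lemma part n (f : 'S_n -> {fset nat}) (X : seq {fset nat}) (P : pred {fset nat}) :
  uniq X -> (forall s, f s \in X) ->
  #|[set s | P (f s)]| = \sum_(T <- X | P T) #|[set s | f s == T]|.
Proof.
move=> uX hX.
have e : forall Q : pred 'S_n, #|[set s | Q s]| = \sum_s (Q s : nat).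
  by move=> Q; rewrite -sum1dep_card big_mkcond /=; apply: eq_bigr => s _; case: (Q s).
rewrite (e (fun s => P (f s))) (eq_bigr (fun T => \sum_s (f s == T : nat))); last by move=> T _; rewrite (e (fun s => f s == T)).
rewrite exchange_big /=; apply: eq_bigr => s _.
rewrite big_mkcond (bigD1_seq (f s)) //= eqxx big1 ?addn0; first by case: (P (f s)).
by move=> T; rewrite eq_sym => /negbTE ->; case: (P T).

Qed.

Lemma b_sum m (pp : 'S_m) n S (X : seq {fset nat}) :
  uniq X -> (forall s : 'S_n, Em pp s \in X) ->
  bn pp n S = \sum_(T <- X | (S `<=` T)%fset) a_num pp n T.
Proof. by move=> uX hX; rewrite /bn (part (fun T => (S `<=` T)%fset) uX hX). Qed.

Lemma a_from_b m (pp : 'S_m) n S (X : seq {fset nat}) :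
  uniq X -> (forall s : 'S_n, Em pp s \in X) -> S \in X ->
  bn pp n S = a_num pp n S + \sum_(T <- X | (S `<` T)%fset) a_num pp n T.
Proof.
move=> uX hX SX; rewrite (@b_sum m pp n S X uX hX) (bigID (fun T => T == S)) /=; congr addn.
  rewrite big_mkcond (bigD1_seq S) //= eqxx fsubset_refl big1 ?addn0 // => T.
  by move/negbTE ->; rewrite andbF.
by apply: eq_bigl => T; rewrite fproperEneq andbC eq_sym.
Qed.

Lemma card_Em m (pp : 'S_m) n (s : 'S_n) : #|` Em pp s| <= n - m + 1.
Proof.
have : (Em pp s `<=` [fset x in iota 1 (n - m + 1)])%fset.
  by apply/fsubsetP => i; rewrite inEm0 => /andP[hi _]; rewrite inE.
by move/fsubset_leq_card; rewrite card_fseq undup_id ?iota_uniq // size_iota.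
Qed.

Section AB.
Variables (m : nat) (p t : 'S_m).

Definition XX n (S : {fset nat}) :=
  undup (S :: [seq Em p s | s <- enum 'S_n] ++ [seq Em t s | s <- enum 'S_n]).

Lemma XX_uniq n S : uniq (XX n S).
Proof. exact: undup_uniq. Qed.

Lemma XX_p n S (s : 'S_n) : Em p s \in XX n S.
Proof. by rewrite mem_undup inE mem_cat map_f ?mem_enum ?orbT. Qed.

Lemma XX_t n S (s : 'S_n) : Em t s \in XX n S.
Proof. by rewrite mem_undup inE mem_cat; apply/orP; right; apply/orP; right; apply: map_f; rewrite mem_enum. Qed.

Lemma XX_S n S : S \in XX n S.
Proof. by rewrite mem_undup mem_head. Qed.

Lemma XX_card n S T : T \in XX n S -> T != S -> #|` T| <= n - m + 1.
Proof.
rewrite mem_undup inE => /orP[/eqP -> /eqP //|]; rewrite mem_cat.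
by case/orP => /mapP[s _ ->] _; apply: card_Em.
Qed.

Lemma a2b : (forall n S, a_num p n S = a_num t n S) -> forall n S, bn p n S = bn t n S.
Proof.
move=> Ha n S.
rewrite (@b_sum m p n S (XX n S) (@XX_uniq n S) (@XX_p n S)).
rewrite (@b_sum m t n S (XX n S) (@XX_uniq n S) (@XX_t n S)).
by apply: eq_bigr => T _; apply: Ha.
Qed.

Lemma b2a : (forall n S, bn p n S = bn t n S) -> forall n S, a_num p n S = a_num t n S.
Proof.
move=> Hb n.
suff : forall k S, n - m + 1 - #|` S| < k -> a_num p n S = a_num t n S.
  by move=> h S; apply: (h (n - m + 1 - #|` S|).+1).
elim=> [//|k IH] S hk.
have e1 := @a_from_b m p n S (XX n S) (@XX_uniq n S) (@XX_p n S) (@XX_S n S).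
have e2 := @a_from_b m t n S (XX n S) (@XX_uniq n S) (@XX_t n S) (@XX_S n S).
rewrite Hb e2 in e1.
suff es : \sum_(T <- XX n S | (S `<` T)%fset) a_num p n T =
          \sum_(T <- XX n S | (S `<` T)%fset) a_num t n T.
  by rewrite es in e1; move/addIn: e1.
rewrite big_seq_cond [RHS]big_seq_cond; apply: eq_bigr => T /andP[TX ST].
apply: IH.
have hT : #|` T| <= n - m + 1.
  by apply: (XX_card TX); move: ST; rewrite fproperEneq eq_sym => /andP[].
have := fproper_ltn_card ST; lia.
Qed.
End AB.

Lemma sub_Em_all m (pp : 'S_m) n (s : 'S_n) (S : {fset nat}) :
  (S `<=` Em pp s)%fset =
  (S `<=` [fset i | i in iota 1 (n - m + 1)])%fset && all (Ep pp s) (sort leq S).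
Proof.
apply/fsubsetP/andP => [h|[/fsubsetP h1 /allP h2]].
  split; first by apply/fsubsetP => x /h; rewrite inEm0 inE => /andP[].
  by apply/allP => x; rewrite mem_sort => /h; rewrite inEm0 => /andP[].
move=> x xS; rewrite inEm0; move: (h1 x xS); rewrite inE => ->.
by apply: h2; rewrite mem_sort.
Qed.

Lemma Em_small m (pp : 'S_m) n (s : 'S_n) : n < m -> Em pp s = fset0.
Proof.
move=> nm; apply/fsetP => i; rewrite inEm0 inE; apply/negbTE.
apply/negP => /andP[_ /eqP e]; move: (congr1 size e).
rewrite size_st size_word /factor size_take size_drop size_word; case: ifP; lia.
Qed.

Lemma all_flatten (T : Type) (a : pred T) (cs : seq (seq T)) :
  all a (flatten cs) = all (all a) cs.
Proof. by elim: cs => //= c cs IH; rewrite all_cat IH. Qed.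

Lemma sorted_crel_ltn m c : sorted (crel m) c -> sorted ltn c.
Proof. by apply: sub_sorted => u v /andP[]. Qed.

Lemma head_last_bounds c : c != [::] -> sorted ltn c ->
  forall i, i \in c -> head 0 c <= i <= last 0 c.
Proof. by case: c => // y c1 _ /sorted_bounds. Qed.

Section Local.
Variables (m : nat) (c : seq nat).
Hypotheses (hm : 0 < m) (cne : c != [::]) (csort : sorted (crel m) c)
           (hpos : all (fun i => 0 < i) c).

Let a := (head 0 c).-1.
Let l := last 0 c - head 0 c + m.
Let c' := map (fun i => i - a) c.
Let C' := [fset x in c']%fset.

Let cl : sorted ltn c := sorted_crel_ltn csort.
Let hb := head_last_bounds cne cl.
Let h0 : 0 < head 0 c.
Proof. by move/allP: hpos; apply; case: c cne => // y c1 _; rewrite mem_head. Qed.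

Lemma c'_sorted : sorted ltn c'.
Proof.
apply/(sortedP 0) => j hj; rewrite size_map in hj.
rewrite !(nth_map 0) //; last by lia.
have h1 : head 0 c <= nth 0 c j by have /andP[] := hb (mem_nth 0 (ltnW hj)).
have := (elimT (sortedP 0) cl j hj); rewrite /a /ltn /= -!subn1; lia.
Qed.

Lemma sortC' : sort leq C' = c'.
Proof.
apply: (irr_sorted_eq ltn_trans ltnn).
- by apply: sortS_sorted.
- exact: c'_sorted.
by move=> x; rewrite mem_sort inE.
Qed.

Lemma loc_card (pp : 'S_m) : #|@locA m pp (a, l, c)| = bn pp l C'.
Proof.
rewrite /bn -cardsE; apply: eq_card => q; rewrite !inE sub_Em_all sortC'.
have -> : (C' `<=` [fset i | i in iota 1 (l - m + 1)])%fset.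
  apply/fsubsetP => x; rewrite inE => /mapP[i ic ->]; rewrite inE mem_iota.
  have := hb ic; rewrite /l /a; lia.
by rewrite /= all_map.
Qed.

Lemma loc_shape :
  [&& (C' `<=` [fset i | i in iota 1 (l - m + 1)])%fset,
      head 0 (sort leq C') == 1 & last 0 (sort leq C') == (l - m + 1)%N] /\
  (forall j, j < (size (sort leq C')).-1 ->
     nth 0 (sort leq C') j.+1 - nth 0 (sort leq C') j < m).
Proof.
rewrite sortC'; split.
  apply/and3P; split.
  - apply/fsubsetP => x; rewrite inE => /mapP[i ic ->]; rewrite inE mem_iota.
    have := hb ic; rewrite /l /a; lia.
  - by rewrite /c' /a; case: c cne h0 => // y c1 _ /= y0; apply/eqP; lia.
  - rewrite /c' /a /l; case: c cne h0 hb => // y c1 _ /= y0 hb'.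
    rewrite (last_map (fun i => i - y.-1)) /=; apply/eqP.
    have := hb' (last y c1) (mem_last _ _); lia.
move=> j; rewrite size_map => hj0.
have hj : j.+1 < size c by lia.
rewrite !(nth_map 0) //; last by lia.
have h1 : head 0 c <= nth 0 c j by have /andP[] := hb (mem_nth 0 (ltnW hj)).
have := (elimT (sortedP 0) csort j hj); rewrite /crel /a -!subn1; lia.
Qed.
End Local.

Lemma C_main m (p t : 'S_m) :
  (forall n S, r_num p n S = r_num t n S) -> forall n S, bn p n S = bn t n S.
Proof.
move=> Hr n S.
case: (posnP m) => [m0|hm].
  by subst m; have -> : p = t by apply/permP => -[].
case: (ltnP n m) => [nm|mn].
  by rewrite /bn; apply: eq_card => s; rewrite !inE !Em_small.
case hU: (S `<=` [fset i | i in iota 1 (n - m + 1)])%fset; last first.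
  by rewrite /bn; apply: eq_card => s; rewrite !inE !sub_Em_all hU.
have hS : forall i, i \in sort leq S -> 0 < i <= n - m + 1.
  move=> i; rewrite mem_sort => /(fsubsetP hU); rewrite inE mem_iota; lia.
have [hc1 hc2 hc3] := clusters_prop m (sortS_sorted S).
pose mkb (c : seq nat) : blk := ((head 0 c).-1, last 0 c - head 0 c + m, c).
pose L := map mkb (clusters m (sort leq S)).
have hcb : forall c, c \in clusters m (sort leq S) ->
    [/\ c != [::], sorted (crel m) c, all (fun i => 0 < i) c &
        forall i, i \in c -> [/\ 0 < head 0 c, head 0 c <= i, i <= last 0 c &
                                 last 0 c <= n - m + 1]].
  move=> c hc; have /andP[cne cs] := hc1 c hc.
  have hb := head_last_bounds cne (sorted_crel_ltn cs).
  have hpos : all (fun i => 0 < i) c.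
    by apply/allP => i /(hc3 c hc) /hS /andP[].
  split => // i ic.
  have hh : head 0 c \in c by case: c cne {hc cs hb hpos ic} => // y c1 _; rewrite mem_head.
  have hl : last 0 c \in c by case: c cne {hc cs hb hpos ic hh} => // y c1 _; rewrite /= mem_last.
  have := hS _ (hc3 c hc _ hh); have := hS _ (hc3 c hc _ hl); have := hb i ic; move=> /andP[? ?] /andP[? ?] /andP[? ?]; split => //.
have eqset : forall pp : 'S_m, bn pp n S =
    #|[set s : 'S_n | all (fun b => all (Ep pp s) b.2) L && true]|.
  move=> pp; rewrite /bn; apply: eq_card => s; rewrite !inE sub_Em_all hU andbT /= /L all_map.
  by rewrite -{1}(flatten_clusters m (sort leq S)) all_flatten.
rewrite !eqset; apply: multi.
- rewrite /L pairwise_map.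
  apply: (sub_in_pairwise (P := mem (clusters m (sort leq S)))) hc2; last by apply/allP.
  move=> c c' hc hc' h; rewrite /before /mkb /=.
  have [cne _ _ hi] := hcb c hc; have [cne' _ _ hi'] := hcb c' hc'.
  have hh : head 0 c \in c by case: c cne {hc hi h} => // y c1 _; rewrite mem_head.
  have hh' : head 0 c' \in c' by case: c' cne' {hc' hi' h} => // y c1 _; rewrite mem_head.
  case: (hi _ hh) => ? ? ? ?; case: (hi' _ hh') => ? ? ? ?; rewrite -!subn1; lia.
- rewrite /L all_map; apply/allP => c hc; rewrite /= /valid /mkb /=.
  have [cne _ _ hi] := hcb c hc.
  have hh : head 0 c \in c by case: c cne {hc hi} => // y c1 _; rewrite mem_head.
  apply/andP; split; first by case: (hi _ hh) => ? ? ? ?; rewrite -!subn1; lia.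
  by apply/allP => i ic; case: (hi _ ic) => ? ? ? ?; rewrite -!subn1; lia.
- move=> b /mapP[c hc ->].
  have [cne cs hpos _] := hcb c hc.
  rewrite /mkb !(loc_card hm cne cs hpos).
  have [h3 hg] := loc_shape hm cne cs hpos.
  by rewrite (key_r p h3 hg) (key_r t h3 hg) Hr.
- by [].
Qed.

Unset Implicit Arguments.

Theorem proposition5p1 (m : nat) (p t : 'S_m) :
  super_strongly_cwilf p t <->
  (forall (n : nat) (S : {fset nat}), r_num p n S = r_num t n S).
Proof.
split.
- move=> Ha n S; have Hb := a2b Ha n S.
  rewrite /r_num.
  case hp: (cluster_set p n S); case ht: (cluster_set t n S) => //.
  + by rewrite -/(bn p n S) Hb (Z hp (negbT ht)).
  + by rewrite -/(bn t n S) -Hb (Z ht (negbT hp)).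
- move=> Hr; apply: b2a; exact: C_main.
Qed.
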